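(* Assume (A1) and (A2), and set $\tilde\eta=2\eta\|\mathbf{u}\|_2^2/m$. Let $k\ge1$ with $\bar T_k<\infty$, and suppose $E_{\bar T_k-1}:=\frac1m\sum_{r\in[m]}\big[\sigma(-\langle\mathbf{w}^{(\bar T_k-1)}_{-y,r},-y\mathbf{u}\rangle)+\sigma(-\langle\mathbf{w}^{(\bar T_k-1)}_{-y,r},-y\mathbf{v}\rangle)\big]<\delta/2$. Then $$yf(\mathbf{x};\mathbf{W}^{(\bar T_k-1)})\ge\frac{2+\tilde\eta-\sqrt{\tilde\eta^2+4\tilde\eta}}{2\tilde\eta},$$ and $$yf(\mathbf{x};\mathbf{W}^{(\bar T_k)})\le yf(\mathbf{x};\mathbf{W}^{(\bar T_k-1)})\Big(1+\tilde\eta\big(1-yf(\mathbf{x};\mathbf{W}^{(\bar T_k-1)})\big)\Big)^2+2E_{\bar T_k-1}.$$ (This holds regardless of whether $\bar T_k$ is before or after $T_{(\mathbf{v})}$.)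
   Context: Single-data setting: $\mathbf{u},\mathbf{v}\in\mathbb{R}^d$ are fixed nonzero vectors with $\langle\mathbf{u},\mathbf{v}\rangle=0$, $y\in\{\pm1\}$, and the single training example is $(\mathbf{x},y)$ with $\mathbf{x}=(y\mathbf{u},y\mathbf{v})$. Let $\sigma(z)=(\max\{z,0\})^2$ (so $\sigma'(z)=2\max\{z,0\}$). Weights $\mathbf{W}=\{\mathbf{w}_{j,r}\}_{j\in\{\pm1\},r\in[m]}\subset\mathbb{R}^d$; network $f(\mathbf{x};\mathbf{W})=\sum_{j\in\{\pm1\}}jF_j(\mathbf{x};\mathbf{W})$ with $F_j(\mathbf{x};\mathbf{W})=\frac1m\sum_{r\in[m]}[\sigma(\langle\mathbf{w}_{j,r},y\mathbf{u}\rangle)+\sigma(\langle\mathbf{w}_{j,r},y\mathbf{v}\rangle)]$; loss $L(\mathbf{W})=\frac12(f(\mathbf{x};\mathbf{W})-y)^2$. All entries of all $\mathbf{w}^{(0)}_{j,r}$ are i.i.d. $N(0,\sigma_0^2)$, and for $t\ge0$: $\mathbf{w}^{(t+1)}_{j,r}=\mathbf{w}^{(t)}_{j,r}-\frac{\eta j}{m}(f(\mathbf{x};\mathbf{W}^{(t)})-y)\big(\sigma'(\langle\mathbf{w}^{(t)}_{j,r},y\mathbf{u}\rangle)y\mathbf{u}+\sigma'(\langle\mathbf{w}^{(t)}_{j,r},y\mathbf{v}\rangle)y\mathbf{v}\big)$ with learning rate $\eta>0$. (A1) Conditions: $m/(4\|\mathbf{u}\|_2^2)\le\eta\le2m/(5\|\mathbf{u}\|_2^2)$;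 $\sigma_0=\tilde\Theta(\max\{\|\mathbf{u}\|_2,\|\mathbf{v}\|_2\}^{-1}d^{-1/2})$; $\|\mathbf{v}\|_2<0.01\|\mathbf{u}\|_2$; $d=\Omega(\mathrm{polylog}(m))$. (A2) Oscillation: there is a constant $\delta\in(0.2,0.8)$ with $|yf(\mathbf{x};\mathbf{W}^{(t)})-1|\ge\delta$ for every $t\ge0$. Up-crossing times: $\bar T_0=0$ and, recursively, $\bar T_k=\min\{t>\bar T_{k-1}:yf(\mathbf{x};\mathbf{W}^{(t)})\ge1\text{ and }yf(\mathbf{x};\mathbf{W}^{(t-1)})<1\}$. $T_{(\mathbf{v})}=\min\{t\ge0:\frac1m\sum_{r}\sigma(\langle\mathbf{w}^{(t)}_{y,r},y\mathbf{v}\rangle)>\delta\}$. *)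

(* Defs.v *)
From HB Require Import structures.
From mathcomp Require Import all_boot all_order all_algebra.
From mathcomp Require Import boolp reals.
Set Implicit Arguments. Unset Strict Implicit. Unset Printing Implicit Defensive.
Import Order.TTheory GRing.Theory Num.Theory.
Local Open Scope ring_scope.

Section Defs.
Variables (R : realType) (d m : nat).

Definition dot (a b : 'rV[R]_d) : R := \sum_(i < d) a 0 i * b 0 i.
Definition norm2 (a : 'rV[R]_d) : R := Num.sqrt (dot a a).

(* Signs j, y in {+1,-1} are encoded by booleans: true = +1, false = -1;
   -y is ~~ y. *)
Definition sgn (b : bool) : R := if b then 1 else -1.

Definition sigma (z : R) : R := (Num.max z 0) ^+ 2.
Definition dsigma (z : R) : R := 2 * Num.max z 0.

Definition weights := bool -> 'I_m -> 'rV[R]_d.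

Definition netF (x : 'rV[R]_d * 'rV[R]_d) (W : weights) (j : bool) : R :=
  (m%:R)^-1 * \sum_(r < m) (sigma (dot (W j r) x.1) + sigma (dot (W j r) x.2)).

Definition netf (x : 'rV[R]_d * 'rV[R]_d) (W : weights) : R :=
  \sum_(j : bool) sgn j * netF x W j.

Definition input (u v : 'rV[R]_d) (y : bool) : 'rV[R]_d * 'rV[R]_d :=
  (sgn y *: u, sgn y *: v).

(* one gradient-descent step on L(W) = 1/2 (f(x;W) - y)^2, as in the paper *)
Definition gd_step (eta : R) (u v : 'rV[R]_d) (y : bool) (W : weights) : weights :=
  fun j r =>
    W j r - (eta * sgn j / m%:R * (netf (input u v y) W - sgn y)) *:
      (dsigma (dot (W j r) (sgn y *: u)) *: (sgn y *: u)
       + dsigma (dot (W j r) (sgn y *: v)) *: (sgn y *: v)).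

Definition traj (eta : R) (u v : 'rV[R]_d) (y : bool) (W0 : weights) (t : nat) : weights :=
  iter t (gd_step eta u v y) W0.

(* Up-crossing times of a real sequence g (g t = y f(x;W^{(t)})):
   Tbar g 0 = Some 0 and Tbar g k.+1 = Some (min {t > Tbar g k : g t >= 1 /\ g (t-1) < 1}),
   or None (i.e. +infinity) if that set is empty or Tbar g k is infinite. *)
Definition upP (g : nat -> R) (s : nat) : pred nat :=
  fun t => [&& (s < t)%N, 1 <= g t & g t.-1 < 1].

Definition next_up (g : nat -> R) (s : nat) : option nat :=
  match pselect (exists t, upP g s t) with
  | left H => Some (ex_minn H)
  | right _ => None
  end.

Fixpoint Tbar (g : nat -> R) (k : nat) : option nat :=
  match k with
  | 0 => Some 0%N
  | k'.+1 => obind (next_up g) (Tbar g k')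
  end.

End Defs.

(* Main.v *)
Require Import Defs.
From HB Require Import structures.
From mathcomp Require Import all_boot all_order all_algebra.
From mathcomp Require Import boolp reals ring lra.
Import Order.TTheory GRing.Theory Num.Theory.
Local Open Scope ring_scope.

Set Implicit Arguments. Unset Strict Implicit.
Section Aux.
Variables (R : realType) (d m : nat).
Implicit Types (a b c : 'rV[R]_d).

Lemma dot_sym a b : dot a b = dot b a.
Proof. by rewrite /dot; apply: eq_bigr => i _; rewrite mulrC. Qed.
Lemma dotBl a b c : dot (a - b) c = dot a c - dot b c.
Proof. by rewrite /dot -sumrB; apply: eq_bigr => i _; rewrite !mxE mulrBl. Qed.
Lemma dotDl a b c : dot (a + b) c = dot a c + dot b c.
Proof. by rewrite /dot -big_split; apply: eq_bigr => i _; rewrite !mxE mulrDl. Qed.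
Lemma dotZl k a c : dot (k *: a) c = k * dot a c.
Proof. by rewrite /dot mulr_sumr; apply: eq_bigr => i _; rewrite !mxE mulrA. Qed.
Lemma dotZr k a c : dot a (k *: c) = k * dot a c.
Proof. by rewrite dot_sym dotZl dot_sym. Qed.
Lemma dot_ge0 a : 0 <= dot a a.
Proof. by rewrite /dot; apply: sumr_ge0 => i _; rewrite -expr2 sqr_ge0. Qed.

Lemma sig_ge0 (z : R) : 0 <= sigma z.
Proof. exact: sqr_ge0. Qed.

Lemma sig_up (z c C : R) : 0 <= c -> c <= C ->
  sigma (z + c * Num.max z 0) <= (1 + C)^+2 * sigma z.
Proof.
move=> c0 cC; rewrite /sigma; have [hz|hz] := lerP z 0.
  by rewrite mulr0 addr0 (max_r hz) expr2 !mulr0.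
rewrite max_l; last first.
  by have := mulr_ge0 c0 (ltW hz); lra.
have := mulr_ge0 (_ : 0 <= C - c) (_ : 0 <= (2 + C + c) * (z * z)).
rewrite !expr2; move=> h; have := h (ltac:(lra)) (ltac:(apply: mulr_ge0; [lra| nra])).
nra.
Qed.

Lemma sig_dn (z c C : R) : 0 <= c -> c <= C -> C <= 1 ->
  (1 - C)^+2 * sigma z <= sigma (z - c * Num.max z 0).
Proof.
move=> c0 cC C1; rewrite /sigma; have [hz|hz] := lerP z 0.
  by rewrite [0 ^+ 2]expr2 mul0r mulr0 sqr_ge0.
rewrite max_l; last first.
  have h1 : 0 <= 1 - c by lra. have := mulr_ge0 h1 (ltW hz). lra.
have h := mulr_ge0 (_ : 0 <= C - c) (_ : 0 <= (2 - C - c) * (z * z)).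
rewrite !expr2; have := h (ltac:(lra)) (ltac:(apply: mulr_ge0; [lra| nra])).
nra.
Qed.

Lemma sgn_sq y : sgn R y * sgn R y = 1.
Proof. by case: y; rewrite /sgn ?mulr1 ?mulrNN ?mulr1. Qed.

Lemma step_dot_u eta u v y (W : weights R d m) j r : dot u v = 0 ->
  dot (gd_step eta u v y W j r) (sgn R y *: u) =
  dot (W j r) (sgn R y *: u) -
  (eta * sgn R j / m%:R * (netf (input u v y) W - sgn R y)) *
    dsigma (dot (W j r) (sgn R y *: u)) * dot u u.
Proof.
move=> huv; rewrite /gd_step dotBl dotZl dotDl !dotZl !dotZr (dot_sym v u) huv.
set A := dsigma _; set B := dsigma _; set N := netf _ _.
by case: y {A B N} (A) (B) (N) => A B N; rewrite /sgn; ring.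
Qed.

Lemma step_dot_v eta u v y (W : weights R d m) j r : dot u v = 0 ->
  dot (gd_step eta u v y W j r) (sgn R y *: v) =
  dot (W j r) (sgn R y *: v) -
  (eta * sgn R j / m%:R * (netf (input u v y) W - sgn R y)) *
    dsigma (dot (W j r) (sgn R y *: v)) * dot v v.
Proof.
move=> huv; rewrite /gd_step dotBl dotZl dotDl !dotZl !dotZr huv.
set A := dsigma _; set B := dsigma _; set N := netf _ _.
by case: y {A B N} (A) (B) (N) => A B N; rewrite /sgn; ring.
Qed.

Lemma netF_le x (W W' : weights R d m) j j' K :
  (forall r, sigma (dot (W' j' r) x.1) <= K * sigma (dot (W j r) x.1)) ->
  (forall r, sigma (dot (W' j' r) x.2) <= K * sigma (dot (W j r) x.2)) ->
  netF x W' j' <= K * netF x W j.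
Proof.
move=> h1 h2; rewrite /netF mulrCA ler_wpM2l ?invr_ge0 ?ler0n // mulr_sumr.
by apply: ler_sum => r _; rewrite mulrDr lerD.
Qed.

Lemma netF_ge x (W W' : weights R d m) j j' K :
  (forall r, K * sigma (dot (W j r) x.1) <= sigma (dot (W' j' r) x.1)) ->
  (forall r, K * sigma (dot (W j r) x.2) <= sigma (dot (W' j' r) x.2)) ->
  K * netF x W j <= netF x W' j'.
Proof.
move=> h1 h2; rewrite /netF mulrCA ler_wpM2l ?invr_ge0 ?ler0n // mulr_sumr.
by apply: ler_sum => r _; rewrite mulrDr lerD.
Qed.

Lemma netF_ge0 x (W : weights R d m) j : 0 <= netF x W j.
Proof.
rewrite /netF mulr_ge0 ?invr_ge0 ?ler0n //; apply: sumr_ge0 => r _.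
by apply: addr_ge0; apply: sig_ge0.
Qed.

Lemma g_eq x (W : weights R d m) y :
  sgn R y * netf x W = netF x W y - netF x W (~~ y).
Proof. by rewrite /netf big_bool; case: y; rewrite /sgn /=; ring. Qed.

End Aux.
Lemma arith (R : realType) (et de E p s x gT Fy Fm : R) :
  x = et * s ->
  1/2 <= et -> et <= 4/5 -> 1/5 < de -> de < 4/5 ->
  0 <= E -> E < de/2 -> p = 1 - s + E -> de <= s -> 0 <= p -> 1 + de <= gT ->
  Fy <= (1 + x)^+2 * p -> 0 <= Fm ->
  (x <= 1 -> (1 - x)^+2 * E <= Fm) -> gT = Fy - Fm ->
  (2 + et - Num.sqrt (et ^+ 2 + 4 * et)) / (2 * et) <= 1 - s /\
  gT <= (1 - s) * (1 + x) ^+ 2 + 2 * E.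
Proof.
move=> hx e1 e2 d1 d2 E0 E1 hpe s1 p0 gT1 hFy hFm hFm2 hgT.
have s0 : 0 < s by lra.
have et0 : 0 < et by lra.
have x0 : 0 < x by rewrite hx; apply: mulr_gt0.
have xs : 5 * x <= 4 * s.
  have := mulr_ge0 (_ : 0 <= 4/5 - et) (ltW s0); rewrite hx; lra.
have xde : 0 <= x * (de/2 - E) by apply: mulr_ge0; lra.
have hx12 : x <= 1/2.
  rewrite leNgt; apply/negP => hx12.
  have [x1|x1] := lerP x 1.
  - have hF := hFm2 x1.
    have id : (1 + x)^+2 * p - (1 - x)^+2 * E = (1 - s) * (1+x)^+2 + 4 * x * E.
      rewrite hpe; ring.
    have h : gT <= (1 - s) * (1+x)^+2 + 4 * x * E.
      have := ler_wpM2r (_ : 0 <= E) (_ : (1 - x)^+2 * E <= Fm).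
      rewrite hgT; lra.
    have h3 := mulr_ge0 (_ : 0 <= 2*x - 1) (_ : 0 <= s - de).
    have h4 := mulr_ge0 (_ : 0 <= s - 5/4 * x) (_ : 0 <= 2 + x^+2).
    have h5 := sqr_ge0 (x - 2/5).
    have h6 : x * (- 1/2 + x - 5/4 * x^+2) < 0.
      rewrite pmulr_rlt0 //. rewrite !expr2 in h5 *; lra.
    have e1' : (1 - s) * (1+x)^+2 = 1 + 2*x + x*x - s - 2 * (x*s) - s*(x*x) by ring.
    rewrite !expr2 in h h4 h6 e1'.
    have := h3 (_ : 0 <= 2*x-1) (_ : 0 <= s - de).
    have := h4 (_ : 0 <= s - 5/4*x) (_ : 0 <= 2 + x*x).
    lra.
  - have h : gT <= (1 - s + E) * (1+x)^+2 by rewrite hgT -hpe mulrC; lra.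
    have s5 : 5/4 < s by lra.
    have xb : x <= 28/25.
      have := mulr_ge0 (_ : 0 <= 4/5 - et) (ltW s0); rewrite hx; lra.
    have Kb : (1+x)^+2 <= 9/2.
      have := mulr_ge0 (_ : 0 <= 53/25 - (1+x)) (_ : 0 <= 53/25 + 1 + x).
      rewrite expr2; lra.
    have K0 : 0 <= (1+x)^+2 by apply: sqr_ge0.
    have c1 : 1 - s + E < 3/20 by lra.
    have [c0|c0] := lerP (1 - s + E) 0.
    + have := mulr_le0_ge0 c0 K0; lra.
    + have := mulr_ge0 (_ : 0 <= 3/20 - (1 - s + E)) K0.
      have := mulr_ge0 (ltW c0) (_ : 0 <= 9/2 - (1+x)^+2).
      lra.
have hF : (1 - x)^+2 * E <= Fm by apply: hFm2; lra.
have id : (1 + x)^+2 * p - (1 - x)^+2 * E = (1 - s) * (1+x)^+2 + 4 * x * E.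
  rewrite hpe; ring.
have gT2 : gT <= (1 - s) * (1 + x)^+2 + 4 * x * E.
  have := ler_wpM2r (_ : 0 <= p) hFy.
  rewrite hgT; lra.
split; last first.
  have := mulr_ge0 (_ : 0 <= 1/2 - x) E0; lra.
set Q := et^+2 * s^+2 + (2*et - et^+2) * s + (1 - 2*et).
have hQ : Q <= 0.
  have hK : (1 - s) * (1 + x)^+2 - 1 = - (s * Q) by rewrite /Q hx; ring.
  have := mulr_ge0 (_ : 0 <= 1/2 - x) (_ : 0 <= de).
  move=> h1.
  rewrite leNgt; apply/negP => hq.
  have := mulr_gt0 s0 hq.
  lra.
rewrite ler_pdivrMr; last lra.
set a := 2 - et + 2 * x.
have a0 : 0 < a by rewrite /a; lra.
suff : a <= Num.sqrt (et ^+ 2 + 4 * et) by rewrite /a hx; lra.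
rewrite -(@ger0_norm _ a); last lra.
rewrite -sqrtr_sqr ler_sqrt; last first.
  apply: addr_ge0; [exact: sqr_ge0 | lra].
have : a ^+ 2 - (et ^+ 2 + 4 * et) = 4 * Q by rewrite /a /Q hx; ring.
lra.
Qed.

Theorem mainTheorem11 (R : realType) (d m : nat) (u v : 'rV[R]_d) (y : bool)
    (eta delta : R) (W0 : weights R d m) (k T : nat) :
    (0 < m)%N ->
    u != 0 -> v != 0 -> dot u v = 0 ->
    0 < eta ->
    (* (A1) *)
    m%:R / (4 * norm2 u ^+ 2) <= eta -> eta <= 2 * m%:R / (5 * norm2 u ^+ 2) ->
    norm2 v < 1 / 100 * norm2 u ->
    (* (A2) *)
    1 / 5 < delta -> delta < 4 / 5 ->
    (forall t : nat,
        delta <= `|sgn R y * netf (input u v y) (traj eta u v y W0 t) - 1|) ->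
    (* k >= 1 and Tbar_k = T < infinity *)
    (1 <= k)%N ->
    Tbar (fun t => sgn R y * netf (input u v y) (traj eta u v y W0 t)) k = Some T ->
    let etat := 2 * eta * norm2 u ^+ 2 / m%:R in
    let W := traj eta u v y W0 in
    let g := fun t => sgn R y * netf (input u v y) (W t) in
    let E := (m%:R)^-1 * \sum_(r < m)
               (sigma (- dot (W T.-1 (~~ y) r) (- sgn R y *: u))
                + sigma (- dot (W T.-1 (~~ y) r) (- sgn R y *: v))) in
    E < delta / 2 ->
    (2 + etat - Num.sqrt (etat ^+ 2 + 4 * etat)) / (2 * etat) <= g T.-1 /\
    g T <= g T.-1 * (1 + etat * (1 - g T.-1)) ^+ 2 + 2 * E.
Proof.
move=> m0 _ _ huv eta0 A1a A1b hv d1 d2 A2 k1 hT etat W g E hE.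
have [T0 [gT1 gT0]] : (0 < T)%N /\ 1 <= g T /\ g T.-1 < 1.
  case: k k1 hT => // k' _ /=.
  case: (Tbar _ k') => //= s0.
  rewrite /next_up; case: pselect => // H [<-].
  case: ex_minnP => t /and3P [st h1 h2] _.
  by split; [apply: leq_ltn_trans st | split].
have eT : T = T.-1.+1 by rewrite prednK.
set W1 := W T.-1.
have hWT : W T = gd_step eta u v y W1 by rewrite /W /W1 {1}eT.
have uu0 := dot_ge0 u; have vv0 := dot_ge0 v.
have Nu : norm2 u ^+ 2 = dot u u by rewrite /norm2 sqr_sqrtr.
have Nv : norm2 v ^+ 2 = dot v v by rewrite /norm2 sqr_sqrtr.
have M0 : 0 < m%:R :> R by rewrite ltr0n.
have uupos : 0 < dot u u.
  rewrite lt_neqAle uu0 andbT; apply/negP => /eqP h.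
  by move: A1b; rewrite Nu -h mulr0 invr0 mulr0; lra.
have vvuu : dot v v <= dot u u.
  rewrite -Nu -Nv; have n0 : 0 <= norm2 v by apply: sqrtr_ge0.
  have n1 : 0 <= norm2 u by apply: sqrtr_ge0.
  rewrite !expr2; nra.
have et1 : 1/2 <= etat.
  move: A1a; rewrite /etat Nu ler_pdivrMr; last by apply: mulr_gt0.
  rewrite ler_pdivlMr //; nra.
have et2 : etat <= 4/5.
  move: A1b; rewrite /etat Nu ler_pdivlMr; last by apply: mulr_gt0.
  rewrite ler_pdivrMr //; nra.
set f1 := netf (input u v y) W1.
set s := 1 - g T.-1.
have gT1' : g T.-1 = sgn R y * f1 by [].
have etv0 : 0 <= 2 * eta * dot v v / m%:R.
  by apply: mulr_ge0; [apply: mulr_ge0; lra | rewrite invr_ge0; lra].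
have etv1 : 2 * eta * dot v v / m%:R <= etat.
  rewrite /etat Nu; apply: ler_wpM2r; [rewrite invr_ge0; lra | nra].
have s0 : 0 < s by rewrite /s; lra.
have etu0 : 0 <= 2 * eta * dot u u / m%:R.
  by apply: mulr_ge0; [apply: mulr_ge0; lra | rewrite invr_ge0; lra].
have cy : forall (a : R), - (eta * sgn R y / m%:R * (f1 - sgn R y) * (2 * a)) =
     (2 * eta * a / m%:R) * s.
  move=> a; rewrite /s gT1'; case: (y) => /=; rewrite /sgn; field; lra.
have cny : forall (a : R), (eta * sgn R (~~ y) / m%:R * (f1 - sgn R y) * (2 * a)) =
     (2 * eta * a / m%:R) * s.
  move=> a; rewrite /s gT1'; case: (y) => /=; rewrite /sgn; field; lra.
set x := etat * s.
have x0 : 0 <= x by apply: mulr_ge0; lra.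
have hFy : netF (input u v y) (W T) y <= (1 + x)^+2 * netF (input u v y) W1 y.
  rewrite hWT; apply: netF_le => r /=.
  - rewrite step_dot_u // /dsigma.
    have -> : forall z c a : R, z - c * (2 * Num.max z 0) * a = z + (- (c * (2 * a))) * Num.max z 0.
      by move=> z c a; ring.
    rewrite cy; apply: sig_up; [apply: mulr_ge0 => //; lra | rewrite /x /etat Nu; lra].
  - rewrite step_dot_v // /dsigma.
    have -> : forall z c a : R, z - c * (2 * Num.max z 0) * a = z + (- (c * (2 * a))) * Num.max z 0.
      by move=> z c a; ring.
    rewrite cy; apply: sig_up; first by apply: mulr_ge0; lra.
    by rewrite /x; apply: ler_wpM2r; lra.
have hFm : x <= 1 -> (1 - x)^+2 * netF (input u v y) W1 (~~ y) <= netF (input u v y) (W T) (~~ y).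
  move=> x1; rewrite hWT; apply: netF_ge => r /=.
  - rewrite step_dot_u // /dsigma.
    have -> : forall z c a : R, z - c * (2 * Num.max z 0) * a = z - (c * (2 * a)) * Num.max z 0.
      by move=> z c a; ring.
    rewrite cny; apply: sig_dn => //; [apply: mulr_ge0 => //; lra | rewrite /x /etat Nu; lra].
  - rewrite step_dot_v // /dsigma.
    have -> : forall z c a : R, z - c * (2 * Num.max z 0) * a = z - (c * (2 * a)) * Num.max z 0.
      by move=> z c a; ring.
    rewrite cny; apply: sig_dn => //; first by apply: mulr_ge0; lra.
    by rewrite /x; apply: ler_wpM2r; lra.
have hEdef : E = netF (input u v y) W1 (~~ y).
  rewrite /E /netF /=; congr (_ * _); apply: eq_bigr => r _.
  by rewrite !dotZr !mulNr !opprK.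
have hg1 : g T.-1 = netF (input u v y) W1 y - E by rewrite hEdef /g g_eq.
have hgT : g T = netF (input u v y) (W T) y - netF (input u v y) (W T) (~~ y) by rewrite /g g_eq.
have sde : delta <= s.
  have := A2 T.-1; rewrite -/W -/(g T.-1) ler0_norm; last lra.
  by rewrite /s; lra.
have gTde : 1 + delta <= g T.
  have := A2 T; rewrite -/W -/(g T) ger0_norm; last lra.
  lra.
have E0 : 0 <= E by rewrite hEdef; apply: netF_ge0.
have [c1 c2] := @arith R etat delta E (netF (input u v y) W1 y) s x (g T)
  (netF (input u v y) (W T) y) (netF (input u v y) (W T) (~~ y)) erefl et1 et2 d1 d2
  E0 hE (ltac:(rewrite /s; lra)) sde (netF_ge0 _ _ _) gTde hFy (netF_ge0 _ _ _)
  (ltac:(by rewrite -hEdef in hFm)) hgT.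
have hs : g T.-1 = 1 - s by rewrite /s; lra.
rewrite hs; split => //.
Qed.
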